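(* Let $G$ be a graph and $k\in\mathbb{N}$. If $\mathcal{D}$ is a $k$-tight tree-partition of $G$ that has a $k$-splittable torso, then there is a $k$-tight tree-partition $\mathcal{D}'$ of $G$ with $\mathbf{w}(\mathcal{D}')<\mathbf{w}(\mathcal{D})$.
   Context: All graphs are finite, undirected, loopless, may have parallel edges; degrees count edges with multiplicity and $\Delta(H)$ is the maximum degree of $H$. A tree-partition of $G$ is a pair $(T,\mathcal{B})$ with $T$ a tree and $\mathcal{B}=\{B_t: t\in V(T)\}$ a family of pairwise disjoint, possibly empty, subsets of $V(G)$ whose union is $V(G)$. For $e\in E(T)$, with $T_1,T_2$ the components of $T-e$ and $V_i=\bigcup_{t\in V(T_i)}B_t$, $\mathbf{cross}(e)$ is the set of edges of $G$ between $V_1$ and $V_2$; the adhesion is $\max_{e\in E(T)}|\mathbf{cross}(e)|$. For $t\in V(T)$, with $T_1,\dots,T_q$ the components of $T-t$, the torso $Z_t$ is obtained from $G$ by identifying, for each $i$, all vertices of $\bigcup_{h\in V(T_i)}B_h$ into a single new vertex (a satellite), keeping parallel edges and deleting loops. The strength of the tree-partition is $\min_{t\in V(T)}\Delta(Z_t)$. A tree-partition is $k$-tight if its adhesion is at most $k$ and its strength is at least $k+1$. A torso $Z_t$ is $k$-splittable if it has a cut $(X,V(Z_t)\setminus X)$ with at most $k$ crossing edges such that both $X$ and $V(Z_t)\setminus X$ contain a vertex of degree at least $k+1$ in $Z_t$. For a tree-partition $\mathcal{D}$, $\mathbf{s}_{\mathcal{D}}(t)$ is the number of vertices of $B_t$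 of degree at least $k+1$ in $G$, and $\mathbf{w}(\mathcal{D})=\sum_{t\in V(T)}(\mathbf{s}_{\mathcal{D}}(t)-1)$. *)

(* Defs.v *)
From HB Require Import structures.
From mathcomp Require Import all_boot all_order all_algebra.
Set Implicit Arguments. Unset Strict Implicit. Unset Printing Implicit Defensive.
Import Order.TTheory GRing.Theory Num.Theory.

(* A finite loopless multigraph on vertex type V is given by an edge
   multiplicity function m : V -> V -> nat (m u v = number of parallel
   edges between u and v). *)
Definition multigraph (V : finType) (m : V -> V -> nat) : Prop :=
  (forall u v, m u v = m v u) /\ (forall u, m u u = 0%N).

Definition degG (V : finType) (m : V -> V -> nat) (v : V) : nat :=
  \sum_(u : V) m v u.

(* A (finite, nonempty) tree: a symmetric irreflexive relation that is
   connected and has exactly #|T| - 1 edges (2 * (#|T|-1) ordered pairs). *)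
Definition is_tree (T : finType) (tE : rel T) : Prop :=
  [/\ symmetric tE, irreflexive tE, (0 < #|T|)%N,
      (forall x y, connect tE x y) &
      #|[set p : T * T | tE p.1 p.2]| = (2 * (#|T| - 1))%N].

Definition tree_partition (V T : finType) (tE : rel T) (B : T -> {set V}) : Prop :=
  [/\ is_tree tE,
      (forall t t', t != t' -> [disjoint B t & B t']) &
      (forall v : V, exists t, v \in B t)].

Section TreePartition.
Variables (V T : finType) (m : V -> V -> nat) (k : nat)
          (tE : rel T) (B : T -> {set V}).

Definition tE_minus_edge (a b : T) : rel T :=
  fun x y => tE x y && ~~ (((x == a) && (y == b)) || ((x == b) && (y == a))).

Definition side (a b c : T) : {set V} :=
  [set v | [exists h, (v \in B h) && connect (tE_minus_edge a b) c h]].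

Definition cross (a b : T) : nat :=
  \sum_(u in side a b a) \sum_(v in side a b b) m u v.

Definition adhesion : nat := \max_(p : T * T | tE p.1 p.2) cross p.1 p.2.

Definition tE_del (t : T) : rel T := fun x y => [&& tE x y, x != t & y != t].

(* Torso Z_t: vertex set = B_t (inl w) plus one satellite per component of
   T - t; the component is represented by its unique neighbour s of t (inr s). *)
Definition torso_vert (t : T) (x : V + T) : bool :=
  match x with inl w => w \in B t | inr s => tE t s end.

Definition cls (t : T) (x : V + T) : {set V} :=
  match x with
  | inl w => if w \in B t then [set w] else set0
  | inr s => if tE t s then
               [set v | [exists h, (v \in B h) && connect (tE_del t) s h]]
             else set0
  end.

Definition tmult (t : T) (x y : V + T) : nat :=
  if x == y then 0%N else \sum_(u in cls t x) \sum_(v in cls t y) m u v.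

Definition tdeg (t : T) (x : V + T) : nat :=
  \sum_(y | torso_vert t y) tmult t x y.

Definition tDelta (t : T) : nat := \max_(x | torso_vert t x) tdeg t x.

(* strength >= k+1, i.e. min_t Delta(Z_t) >= k+1 (T is nonempty) *)
Definition k_tight : Prop :=
  (adhesion <= k)%N /\ (forall t, (k.+1 <= tDelta t)%N).

Definition k_splittable (t : T) : Prop :=
  exists X : {set V + T},
    [/\ (\sum_(x | torso_vert t x && (x \in X))
          \sum_(y | torso_vert t y && (y \notin X)) tmult t x y <= k)%N,
        (exists x, [/\ torso_vert t x, x \in X & (k < tdeg t x)%N]) &
        (exists y, [/\ torso_vert t y, y \notin X & (k < tdeg t y)%N])].

(* s_D(t) and w(D) (an integer, since s_D(t) - 1 may be -1) *)
Definition sD (t : T) : nat := #|[set v in B t | (k < degG m v)%N]|.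

Definition wD : int := (\sum_(t : T) ((sD t)%:Z - 1))%R.

End TreePartition.

(* Main.v *)
Require Import Defs.
From mathcomp Require Import all_boot all_order all_algebra.
From mathcomp Require Import zify.
Set Implicit Arguments. Unset Strict Implicit. Unset Printing Implicit Defensive.

Lemma connect_map (A B : finType) (e : rel A) (e' : rel B) (f : A -> B) :
  (forall x y, e x y -> connect e' (f x) (f y)) ->
  forall x y, connect e x y -> connect e' (f x) (f y).
Proof.
move=> H x y /connectP [p pp ->]; elim: p x pp => [|z p IH] x /=.
  by move=> _; apply: connect0.
move=> /andP [exz pz]; exact: connect_trans (H _ _ exz) (IH _ pz).
Qed.

Lemma connect_inv (A : finType) (e : rel A) (P : pred A) :
  (forall x y, e x y -> P x -> P y) -> forall x y, connect e x y -> P x -> P y.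
Proof.
move=> H x y /connectP [p pp ->]; elim: p x pp => [|z p IH] x //= /andP [exz pz] Px.
exact: IH pz (H _ _ exz Px).
Qed.

Lemma nbr_conn (A : finType) (e : rel A) (t h : A) :
  connect e t h -> h != t -> exists2 s, e t s & connect (tE_del e t) s h.
Proof.
move=> /connectP [p pp lp] ht.
suff : forall x, path e x p -> last x p = h ->
  (exists2 s, e t s & connect (tE_del e t) s h) \/ (x != t /\ connect (tE_del e t) x h).
  by move=> /(_ t pp (esym lp)) [//|[]]; rewrite eqxx.
elim: p {pp lp} => [|z p IH] x /=.
  by move=> _ ->; right; split => //; apply: connect0.
move=> /andP [exz pz] lz; case: (IH z pz lz) => [//|[zt cz]]; first by left.
case: (eqVneq x t) => [xt|xt].
  by left; exists z => //; rewrite -xt.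
right; split => //; apply: connect_trans cz; apply: connect1.
by rewrite /tE_del exz xt zt.
Qed.

Lemma conn_edges_lb (A : finType) (e : rel A) :
  symmetric e -> (forall x y, connect e x y) ->
  (2 * (#|A| - 1) <= #|[set p : A * A | e p.1 p.2]|)%N.
Proof.
move=> sym conn.
case: (pickP (fun _ : A => true)) => [r _|A0]; last first.
  by rewrite (eq_card0 (fun x => A0 x)).
pose Pd v n := [exists p : n.-tuple A, path e r p && (last r p == v)].
have exd : forall v, exists n, Pd v n.
  move=> v; case/connectP: (conn r v) => p pp lp; exists (size p).
  by apply/existsP; exists (in_tuple p); rewrite /= pp -lp eqxx.
pose d v := ex_minn (exd v).
have par_ex : forall v, v != r -> exists u, e u v && (d u < d v)%N.
  move=> v vr; rewrite /d; case: ex_minnP => n /existsP [p /andP [pp /eqP lp]] _.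
  case/lastP: (tval p) pp lp (size_tuple p) => [|q z] /=.
    by move=> _ rv; rewrite rv eqxx in vr.
  rewrite rcons_path last_rcons size_rcons => /andP [pq ez] zv sz.
  exists (last r q); rewrite -zv ez /=.
  case: ex_minnP => n' _ min'; apply: leq_ltn_trans (min' (size q) _) _.
    by apply/existsP; exists (in_tuple q); rewrite /= pq eqxx.
  by rewrite sz.
pose par v := odflt r [pick u | e u v && (d u < d v)%N].
have parP : forall v, v != r -> e (par v) v && (d (par v) < d v)%N.
  move=> v vr; rewrite /par; case: pickP => [u //|none].
  by case: (par_ex v vr) => u; rewrite none.
pose S := [set~ r].
pose f1 v := (par v, v); pose f2 v := (v, par v).
have i1 : injective f1 by move=> x y [].
have i2 : injective f2 by move=> x y [].
have sub : (f1 @: S :|: f2 @: S) \subset [set p : A * A | e p.1 p.2].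
  apply/subsetP => p; rewrite !inE => /orP [] /imsetP [v]; rewrite !inE => vr ->;
    have /andP [H _] := parP v vr; by rewrite //= sym.
have dis : f1 @: S :&: f2 @: S = set0.
  apply/setP => p; rewrite !inE; apply/negP => /andP [/imsetP [v vr ->] /imsetP [u ur]].
  move: vr ur; rewrite !inE => vr ur [E1 E2].
  have /andP [_ h1] := parP v vr; have /andP [_ h2] := parP u ur.
  move: h1 h2; rewrite E1 E2 => h1 h2; have := ltn_trans h1 h2; by rewrite ltnn.
have := subset_leq_card sub; rewrite cardsU dis cards0 subn0 !card_imset //.
rewrite cardsC1; lia.
Qed.

Lemma tree_nbr_disc (A : finType) (e : rel A) t s1 s2 :
  is_tree e -> e t s1 -> e t s2 -> s1 != s2 -> ~~ connect (tE_del e t) s1 s2.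
Proof.
case=> sym irr _ conn cnt ts1 ts2 s12; apply/negP => C.
pose e0 := tE_minus_edge e t s1.
have ts : t != s1 by apply/eqP => E; rewrite -E irr in ts1.
have sym0 : symmetric e0.
  move=> x y; rewrite /e0 /tE_minus_edge (sym x y).
  by case: (x == t); case: (x == s1); case: (y == t); case: (y == s1); rewrite /= ?andbF ?andbT ?orbF.
have del0 : forall x y, tE_del e t x y -> e0 x y.
  move=> x y /and3P [exy xt yt]; rewrite /e0 /tE_minus_edge exy /=.
  by rewrite (negbTE xt) (negbTE yt) /= andbF.
have C0 : connect e0 s2 s1.
  rewrite (sym_connect_sym sym0); apply: (connect_map (f := id)) C => x y H.
  exact: connect1 (del0 _ _ H).
have t2 : e0 t s2 by rewrite /e0 /tE_minus_edge ts2 eqxx (negbTE ts) /= orbF eq_sym.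
have conn0 : forall x y, connect e0 x y.
  move=> x y; apply: (connect_sub _ (conn x y)) => a b eab.
  case: (boolP (((a == t) && (b == s1)) || ((a == s1) && (b == t)))).
    case/orP => /andP [/eqP -> /eqP ->].
      exact: connect_trans (connect1 t2) C0.
    rewrite (sym_connect_sym sym0); exact: connect_trans (connect1 t2) C0.
  by move=> H; apply: connect1; rewrite /e0 /tE_minus_edge eab H.
have lb := conn_edges_lb sym0 conn0.
have D : [set (t, s1); (s1, t)] \subset [set p : A * A | e p.1 p.2].
  apply/subsetP => p; rewrite !inE => /orP [] /eqP -> /=; [done | by rewrite (sym s1 t)].
have E0 : [set p : A * A | e p.1 p.2] :\: [set (t, s1); (s1, t)] = [set p : A * A | e0 p.1 p.2].
  apply/setP => [[x y]]; rewrite !inE /e0 /tE_minus_edge /= !xpair_eqE andbC.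
  done.
have := cardsID [set (t, s1); (s1, t)] [set p : A * A | e p.1 p.2].
rewrite (setIidPr D) E0 cards2 xpair_eqE (negbTE ts) /= cnt => H; move: lb; by rewrite -H leqNgt addSnnS leq_addl.
Qed.

Lemma sum_disj (I W : finType) (P : pred I) (C : I -> {set W}) (U : {set W}) (f : W -> nat) :
  (forall i j v, P i -> P j -> v \in C i -> v \in C j -> i = j) ->
  (forall i, P i -> C i \subset U) ->
  (\sum_(i | P i) \sum_(v in C i) f v <= \sum_(v in U) f v)%N.
Proof.
move=> disj sub.
rewrite (eq_bigr (fun i => \sum_v (if v \in C i then f v else 0))); last first.
  by move=> i _; rewrite big_mkcond.
rewrite exchange_big [X in (_ <= X)%N]big_mkcond /=; apply: leq_sum => v _.
case: (boolP [exists i, P i && (v \in C i)]) => [/existsP [i /andP [Pi vi]]|/existsPn nv].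
- rewrite (bigD1 i) //= vi big1 ?addn0; first by rewrite (subsetP (sub i Pi) v vi).
  move=> j /andP [Pj ji]; case: ifP => // vj.
  by rewrite (disj j i v Pj Pi vj vi) eqxx in ji.
- rewrite big1 // => i Pi; by move: (nv i); rewrite Pi /= => /negbTE ->.
Qed.

Lemma sum_cover (I W : finType) (P : pred I) (C : I -> {set W}) (U : {set W}) (f : W -> nat) :
  (forall v, v \in U -> exists2 i, P i & v \in C i) ->
  (\sum_(v in U) f v <= \sum_(i | P i) \sum_(v in C i) f v)%N.
Proof.
move=> cov.
rewrite (eq_bigr (fun i => \sum_v (if v \in C i then f v else 0))); last first.
  by move=> i _; rewrite big_mkcond.
rewrite exchange_big [X in (X <= _)%N]big_mkcond /=; apply: leq_sum => v _.
case: ifP => // vU; case: (cov v vU) => i Pi vi.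
by rewrite (bigD1 i) //= vi leq_addr.
Qed.

Lemma sum_sub (W : finType) (A B : {set W}) (f : W -> nat) :
  (forall v, v \in A -> v \in B) -> (\sum_(v in A) f v <= \sum_(v in B) f v)%N.
Proof.
move=> AB; rewrite [X in (X <= _)%N]big_mkcond [X in (_ <= X)%N]big_mkcond /=.
apply: leq_sum => v _; case: ifP => // /AB ->; done.
Qed.

Lemma cross_bound (W S : finType) (mm : W -> W -> nat) (e : rel S) (BB : S -> {set W}) a b
  (T1 T2 : {set W}) :
  (forall v, v \in side e BB a b a -> v \in T1) ->
  (forall v, v \in side e BB a b b -> v \in T2) ->
  (cross mm e BB a b <= \sum_(u in T1) \sum_(v in T2) mm u v)%N.
Proof.
move=> h1 h2; rewrite /cross.
apply: (@leq_trans (\sum_(u in side e BB a b a) \sum_(v in T2) mm u v)).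
  by apply: leq_sum => u _; apply: sum_sub.
exact: sum_sub.
Qed.

Lemma side_swap (W S : finType) (e : rel S) (BB : S -> {set W}) a b c :
  side e BB a b c = side e BB b a c.
Proof.
have Ee : tE_minus_edge e a b =2 tE_minus_edge e b a.
  move=> x y; rewrite /tE_minus_edge; congr (_ && ~~ _); apply: orbC.
by apply/setP => v; rewrite !inE; apply: eq_existsb => h; rewrite (eq_connect Ee).
Qed.

Lemma cross_swap (W S : finType) (mm : W -> W -> nat) (e : rel S) (BB : S -> {set W}) a b :
  (forall u v, mm u v = mm v u) -> cross mm e BB a b = cross mm e BB b a.
Proof.
move=> msym; rewrite /cross exchange_big !(side_swap _ _ a b).
by apply: eq_bigr => u _; apply: eq_bigr => v _; rewrite msym.
Qed.

Section Old.
Variables (V T : finType) (m : V -> V -> nat) (k : nat) (tE : rel T) (B : T -> {set V}).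
Hypothesis mg : multigraph m.
Hypothesis tp : tree_partition tE B.

Lemma tp_tree : is_tree tE. Proof. by case: tp. Qed.
Lemma tp_sym : symmetric tE. Proof. by case: tp_tree. Qed.
Lemma tp_irr : irreflexive tE. Proof. by case: tp_tree. Qed.

Lemma bag_uniq h1 h2 v : v \in B h1 -> v \in B h2 -> h1 = h2.
Proof.
move=> v1 v2; case: (eqVneq h1 h2) => // ne; case: tp => _ disj _.
by have := disjointFr (disj _ _ ne) v1; rewrite v2.
Qed.

Lemma del_ne t s h : connect (tE_del tE t) s h -> s != t -> h != t.
Proof.
apply: (connect_inv (P := fun x => x != t)) => x y /and3P [].
by move=> _ _ ->.
Qed.

Lemma del_sym t : symmetric (tE_del tE t).
Proof.
move=> x y; rewrite /tE_del (tp_sym x y).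
by case: (x == t); case: (y == t); rewrite ?andbF.
Qed.

Lemma del_minus t s x y : connect (tE_del tE t) x y -> connect (tE_minus_edge tE t s) x y.
Proof.
apply: (connect_map (f := id)) => a b /and3P [ab xat bt]; apply: connect1.
by rewrite /tE_minus_edge ab (negbTE xat) (negbTE bt) /= andbF.
Qed.

Lemma nbr_ne t s : tE t s -> s != t.
Proof. by move=> ts; apply/eqP => E; rewrite E tp_irr in ts. Qed.

Lemma cls_disj t x y v : v \in cls tE B t x -> v \in cls tE B t y -> x = y.
Proof.
case: x => [a|s1]; case: y => [b|s2] /=.
- case: ifP => _; last by rewrite !inE.
  case: ifP => _; last by rewrite !inE.
  by rewrite !inE => /eqP -> /eqP ->.
- case: ifP => aB; last by rewrite !inE.
  case: ifP => ts; last by rewrite !inE.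
  rewrite !inE => /eqP -> /existsP [h /andP [vh ch]].
  have := del_ne ch (nbr_ne ts); by rewrite -(bag_uniq aB vh) eqxx.
- case: ifP => ts; last by rewrite !inE.
  case: ifP => bB; last by rewrite !inE.
  rewrite !inE => /existsP [h /andP [vh ch]] /eqP E; rewrite E in vh.
  have := del_ne ch (nbr_ne ts); by rewrite -(bag_uniq bB vh) eqxx.
- case: ifP => ts1; last by rewrite !inE.
  case: ifP => ts2; last by rewrite !inE.
  rewrite !inE => /existsP [h1 /andP [vh1 ch1]] /existsP [h2 /andP [vh2 ch2]].
  rewrite (bag_uniq vh1 vh2) in ch1.
  case: (eqVneq s1 s2) => [->//|ne].
  have : connect (tE_del tE t) s1 s2.
    apply: connect_trans ch1 _; by rewrite (sym_connect_sym (@del_sym t)).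
  by rewrite (negbTE (tree_nbr_disc tp_tree ts1 ts2 ne)).
Qed.

Lemma in_side a b c v :
  (v \in side tE B a b c) = [exists h, (v \in B h) && connect (tE_minus_edge tE a b) c h].
Proof. by rewrite inE. Qed.

Lemma tdeg_inl t w : w \in B t -> (tdeg m tE B t (inl w) <= degG m w)%N.
Proof.
move=> wB; rewrite /tdeg.
rewrite (eq_bigr (fun y => \sum_(v in (if inl w == y then set0 else cls tE B t y)) m w v)); last first.
  move=> y _; rewrite /tmult; case: eqP => _; first by rewrite big_set0.
  by rewrite /= wB big_set1.
have HH := (sum_disj (P := torso_vert tE B t) (C := fun y => if inl w == y then set0 else cls tE B t y) (U := [set: V]) (m w)). refine (leq_trans (HH _ _) _).
- move=> i j v _ _; case: eqP => _; first by rewrite inE.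
  case: eqP => _; first by rewrite inE.
  exact: cls_disj.
- by move=> i _; apply: subsetT.
- rewrite /degG; apply: eq_leq; apply: eq_bigl => v; by rewrite inE.
Qed.

Lemma tdeg_inr t s : tE t s -> (tdeg m tE B t (inr s) <= cross m tE B t s)%N.
Proof.
move=> ts; rewrite /tdeg.
rewrite (eq_bigr (fun y => \sum_(u in cls tE B t (inr s))
     \sum_(v in (if inr s == y then set0 else cls tE B t y)) m u v)); last first.
  move=> y _; rewrite /tmult; case: eqP => _; last by [].
  by rewrite big1 // => u _; rewrite big_set0.
rewrite exchange_big /=.
apply: (@leq_trans (\sum_(u in cls tE B t (inr s)) \sum_(v in side tE B t s t) m u v)).
  apply: leq_sum => u _; apply: sum_disj.
  - move=> i j v _ _; case: eqP => _; first by rewrite inE.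
    case: eqP => _; first by rewrite inE.
    exact: cls_disj.
  - move=> y _; apply/subsetP => v; case: eqP => // ny; first by rewrite inE.
    case: y ny => [w|s'] /= ny.
      case: ifP => wB; last by rewrite !inE.
      rewrite inE => /eqP ->; rewrite in_side; apply/existsP; exists t.
      by rewrite wB connect0.
    case: ifP => ts'; last by rewrite !inE.
    rewrite inE => /existsP [h /andP [vh ch]]; rewrite in_side; apply/existsP; exists h.
    rewrite vh /=; apply: connect_trans (del_minus s ch); apply: connect1.
    rewrite /tE_minus_edge ts' eqxx /= negb_or; apply/andP; split.
      by apply/eqP => E; apply: ny; rewrite E.
    by rewrite eq_sym (negbTE (nbr_ne ts)).
apply: (@leq_trans (\sum_(u in side tE B t s s) \sum_(v in side tE B t s t) m u v)).
  apply: sum_sub => v; rewrite /= ts inE => /existsP [h /andP [vh ch]].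
  rewrite in_side; apply/existsP; exists h; by rewrite vh (del_minus s ch).
rewrite /cross exchange_big; apply: eq_leq; apply: eq_bigr => u _; apply: eq_bigr => v _.
by case: mg => msym _; rewrite msym.
Qed.

Lemma cross_adh a b : tE a b -> (cross m tE B a b <= adhesion m tE B)%N.
Proof. by move=> ab; exact: (@leq_bigmax_cond _ _ _ (a, b)). Qed.

Lemma high_in_bag t : k_tight m k tE B -> exists2 w, w \in B t & (k < degG m w)%N.
Proof.
case=> adh str.
case: (boolP [exists w, (w \in B t) && (k < degG m w)%N]) => [/existsP [w /andP [] ]|/existsPn nw].
  by exists w.
have := str t; rewrite ltnNge => /negP []; apply/bigmax_leqP => x.
case: x => [w|s] /= H.
  apply: leq_trans (tdeg_inl H) _; have := nw w; by rewrite H /= -leqNgt.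
apply: leq_trans (tdeg_inr H) _; exact: leq_trans (cross_adh H) adh.
Qed.

Lemma tdeg_lower t w : w \in B t -> (degG m w <= tdeg m tE B t (inl w))%N.
Proof.
move=> wB; rewrite /tdeg.
rewrite (eq_bigr (fun y => \sum_(v in (if inl w == y then set0 else cls tE B t y)) m w v)); last first.
  move=> y _; rewrite /tmult; case: eqP => _; first by rewrite big_set0.
  by rewrite /= wB big_set1.
have -> : degG m w = \sum_(v in [set v | v != w]) m w v.
  rewrite /degG (bigD1 w) //=; case: mg => _ ->; rewrite add0n.
  by apply: eq_bigl => v; rewrite inE.
apply: sum_cover => v; rewrite inE => vw.
case: tp => [[_ _ _ conn _] _ cov]; case: (cov v) => h vh.
case: (eqVneq h t) => [E|ht].
  exists (inl v); first by rewrite /= -E.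
  rewrite /= -E vh; case: eqP => [[E']|_]; first by rewrite E' eqxx in vw.
  by rewrite inE.
case: (nbr_conn (conn t h) ht) => s ts cs.
exists (inr s) => //=; rewrite ts inE; apply/existsP; exists h; by rewrite vh cs.
Qed.

Lemma tDelta_lower t w : w \in B t -> (degG m w <= tDelta m tE B t)%N.
Proof.
move=> wB; apply: leq_trans (tdeg_lower wB) _.
exact: (@leq_bigmax_cond _ _ _ (inl w)).
Qed.
End Old.

Section New.
Variables (V T : finType) (m : V -> V -> nat) (k : nat) (tE : rel T) (B : T -> {set V}).
Hypothesis mg : multigraph m.
Hypothesis tp : tree_partition tE B.
Hypothesis tight : k_tight m k tE B.
Variables (t0 : T) (X : {set V + T}).

Definition XT := [set s | tE t0 s && (inr s \in X)].
Definition XV := [set w in B t0 | inl w \in X].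

Definition tE' : rel (option T) := fun x y =>
  match x, y with
  | Some a, Some b => [&& tE a b, ~~ ((a == t0) && (b \in XT)) & ~~ ((b == t0) && (a \in XT))]
  | None, Some b => (b == t0) || (b \in XT)
  | Some a, None => (a == t0) || (a \in XT)
  | None, None => false
  end.

Definition B' (x : option T) : {set V} :=
  match x with None => XV | Some a => if a == t0 then B t0 :\: XV else B a end.

Definition f (x : option T) : T := odflt t0 x.

Lemma t0XT : t0 \notin XT.
Proof. by rewrite inE (tp_irr tp). Qed.

Lemma XT_ne s : s \in XT -> s != t0.
Proof. by move=> sX; apply/eqP => E; rewrite E (negbTE t0XT) in sX. Qed.

Lemma XT_nbr s : s \in XT -> tE t0 s.
Proof. by rewrite inE => /andP []. Qed.

Lemma sym' : symmetric tE'.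
Proof.
move=> [a|] [b|] //=; rewrite (tp_sym tp a b).
by case: (tE b a) => //=; rewrite andbC.
Qed.

Lemma irr' : irreflexive tE'.
Proof. by move=> [a|] //=; rewrite (tp_irr tp). Qed.

Lemma old_edge_conn a b : tE a b -> connect tE' (Some a) (Some b).
Proof.
move=> ab; case: (boolP (tE' (Some a) (Some b))) => [H|]; first exact: connect1.
rewrite /= ab /= negb_and !negbK => /orP [] /andP [/eqP E bX].
  by apply: (@connect_trans _ _ None); apply: connect1; rewrite /= ?E ?eqxx ?bX ?orbT.
by apply: (@connect_trans _ _ None); apply: connect1; rewrite /= ?E ?eqxx ?bX ?orbT.
Qed.

Lemma to_t0 x : connect tE' x (Some t0).
Proof.
case: x => [a|]; last by apply: connect1; rewrite /= eqxx.
case: (tp_tree tp) => _ _ _ conn _.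
exact: (connect_map (f := Some) old_edge_conn (conn a t0)).
Qed.

Lemma conn' x y : connect tE' x y.
Proof.
apply: connect_trans (to_t0 x) _; rewrite (sym_connect_sym sym'); exact: to_t0.
Qed.

Definition g (p : T * T) : option T * option T :=
  let: (a, b) := p in
  if (a == t0) && (b \in XT) then (None, Some b)
  else if (b == t0) && (a \in XT) then (Some a, None) else (Some a, Some b).

Lemma g_inj : injective g.
Proof.
apply: (can_inj (g := fun p => (f p.1, f p.2))) => -[a b]; rewrite /g.
case: ifP => [/andP [/eqP -> _]|_] //; case: ifP => [/andP [/eqP -> _]|_] //.
Qed.

Lemma gf u w : tE' u w -> f u != f w -> g (f u, f w) = (u, w).
Proof.
case: u => [a|]; case: w => [b|] //=.
- by move=> /and3P [_ /negbTE -> /negbTE ->].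
- case/orP => [/eqP ->|aX]; first by rewrite eqxx.
  by move=> _; rewrite (negbTE t0XT) andbF eqxx aX.
- case/orP => [/eqP ->|bX]; first by rewrite eqxx.
  by move=> _; rewrite eqxx bX.
Qed.

Lemma f_edge u w : tE' u w -> (f u == f w) || tE (f u) (f w).
Proof.
case: u => [a|]; case: w => [b|] //=.
- by case/and3P => ->; rewrite orbT.
- by case/orP => [/eqP ->|/XT_nbr]; [rewrite eqxx | rewrite (tp_sym tp) => ->; rewrite orbT].
- by case/orP => [/eqP ->|/XT_nbr ->]; [rewrite eqxx | rewrite orbT].
Qed.

Lemma count' : #|[set p : option T * option T | tE' p.1 p.2]| = (2 * (#|{: option T}| - 1))%N.
Proof.
pose E := [set p : T * T | tE p.1 p.2].
pose D := [set (None, Some t0); (Some t0, None)].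
have eqE : [set p : option T * option T | tE' p.1 p.2] = g @: E :|: D.
  apply/setP => -[x y]; rewrite !inE; apply/idP/idP.
  - move=> xy; case: (eqVneq (f x) (f y)) => [fe|fn].
      move: xy fe; case: x => [a|]; case: y => [b|] //=.
      + by move=> /and3P [ab _ _] E'; rewrite E' (tp_irr tp) in ab.
      + by move=> _ Ee; rewrite -?Ee ?eqxx ?orbT.
      + by move=> _ Ee; rewrite ?Ee ?eqxx ?orbT.
    apply/orP; left; apply/imsetP; exists (f x, f y); last by rewrite gf.
    by rewrite inE /=; case/orP: (f_edge xy) => // fe; rewrite fe in fn.
  - case/orP => [/imsetP [[a b] ab ->]|].
      move: ab; rewrite inE /= => ab; rewrite /g.
      case: ifP => [/andP [_ bX]|H1] /=; first by rewrite bX orbT.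
      case: ifP => [/andP [_ aX]|H2] /=; first by rewrite aX orbT.
      by rewrite ab H1 H2.
    by case/orP => /eqP [-> ->] /=; rewrite eqxx.
have dis : g @: E :&: D = set0.
  apply/setP => -[x y]; rewrite !inE; apply/negP => /andP [/imsetP [[a b] _ ->]].
  rewrite /g; case: ifP => [/andP [_ bX]|_].
    by rewrite !xpair_eqE /= orbF => /eqP [Ee]; rewrite Ee (negbTE t0XT) in bX.
  case: ifP => [/andP [_ aX]|_]; first by rewrite !xpair_eqE /= andbT => /eqP [Ee]; rewrite Ee (negbTE t0XT) in aX.
  by rewrite !xpair_eqE /= ?andbF.
rewrite eqE cardsU dis cards0 subn0 card_imset; last exact: g_inj.
rewrite cards2 card_option.
case: (tp_tree tp) => _ _ _ _ ->.
have : (0 < #|T|)%N by apply/card_gt0P; exists t0.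
rewrite xpair_eqE /=; lia.
Qed.

Lemma tree' : is_tree tE'.
Proof.
split; [exact: sym' | exact: irr' | by rewrite card_option | exact: conn' | exact: count'].
Qed.

Lemma Bsub x v : v \in B' x -> v \in B (f x).
Proof.
case: x => [a|] /=; last by rewrite inE => /andP [].
by case: eqP => [->|_] //; rewrite inE => /andP [].
Qed.

Lemma bag'_uniq x y v : v \in B' x -> v \in B' y -> x = y.
Proof.
move=> vx vy; have := bag_uniq tp (Bsub vx) (Bsub vy).
case: x vx => [a|]; case: y vy => [b|] //=.
- by move=> _ _ ->.
- by move=> vy vx Ee; move: vx; rewrite Ee eqxx inE vy.
- by move=> vy vx Ee; move: vy; rewrite -Ee eqxx inE vx.
Qed.

Lemma part' : tree_partition tE' B'.
Proof.
split; first exact: tree'.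
- move=> x y xy; rewrite disjoint_subset; apply/subsetP => v vx; rewrite inE /=.
  by apply/negP => vy; rewrite (bag'_uniq vx vy) eqxx in xy.
- move=> v; case: tp => _ _ /(_ v) [t vt].
  case: (eqVneq t t0) => [Ee|ne].
    case: (boolP (v \in XV)) => vX; first by exists None.
    by exists (Some t0); rewrite /= eqxx inE vX -Ee.
  by exists (Some t); rewrite /= (negbTE ne).
Qed.

Lemma nonc_cond x' y' : tE' x' y' -> f x' != f y' -> forall u w,
  tE_minus_edge tE' x' y' u w -> connect (tE_minus_edge tE (f x') (f y')) (f u) (f w).
Proof.
move=> exy fne u w /andP [uw nuw].
case: (eqVneq (f u) (f w)) => [->|fn]; first exact: connect0.
apply: connect1; rewrite /tE_minus_edge.
have -> : tE (f u) (f w) by case/orP: (f_edge uw) => // fe; rewrite fe in fn.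
apply/negP => /orP [] /andP [/eqP e1 /eqP e2]; apply: (negP nuw).
  have : (u, w) = (x', y') by rewrite -(gf uw fn) -(gf exy fne) e1 e2.
  by case=> -> ->; rewrite !eqxx.
have yx : tE' y' x' by rewrite sym'.
have : (u, w) = (y', x') by rewrite -(gf uw fn) -(gf yx _) ?e1 ?e2 // eq_sym.
by case=> -> ->; rewrite !eqxx orbT.
Qed.

Lemma side_map x' y' :
  (forall u w, tE_minus_edge tE' x' y' u w -> connect (tE_minus_edge tE (f x') (f y')) (f u) (f w)) ->
  forall z' v, v \in side tE' B' x' y' z' -> v \in side tE B (f x') (f y') (f z').
Proof.
move=> H z' v; rewrite !inE => /existsP [h /andP [vh ch]]; apply/existsP; exists (f h).
by rewrite (Bsub vh) (connect_map H ch).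
Qed.

Definition PN (x : option T) : bool :=
  match x with None => true | Some h => [exists s, (s \in XT) && connect (tE_del tE t0) s h] end.

Definition PC (x : option T) : bool :=
  match x with None => false
  | Some h => (h == t0) || [exists s, [&& tE t0 s, s \notin XT & connect (tE_del tE t0) s h]] end.

Lemma del_edge h b : tE h b -> h != t0 -> b != t0 -> tE_del tE t0 h b.
Proof. by move=> hb h0 b0; rewrite /tE_del hb h0 b0. Qed.

Lemma PN_inv x y : tE_minus_edge tE' None (Some t0) x y -> PN x -> PN y.
Proof.
case: x => [h|]; case: y => [b|] //=.
- case/andP => /and3P [hb _ c3] _ /existsP [s /andP [sX ch]].
  have h0 := del_ne ch (XT_ne sX).
  case: (eqVneq b t0) => [Ee|b0].
    rewrite Ee eqxx /= in c3; rewrite Ee in hb.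
    have sh : s != h by apply/eqP => Es; rewrite -Es sX in c3.
    have t0h : tE t0 h by rewrite (tp_sym tp).
    by rewrite (negbTE (tree_nbr_disc (tp_tree tp) (XT_nbr sX) t0h sh)) in ch.
  apply/existsP; exists s; rewrite sX /=.
  exact: connect_trans ch (connect1 (del_edge hb h0 b0)).
- rewrite /tE_minus_edge /= => /andP [/orP [/eqP ->|bX]]; first by rewrite eqxx.
  by move=> _ _; apply/existsP; exists b; rewrite bX connect0.
Qed.

Lemma PC_inv x y : tE_minus_edge tE' None (Some t0) x y -> PC x -> PC y.
Proof.
case: x => [h|]; case: y => [b|] //=.
- case/andP => /and3P [hb c2 _] _ /orP [/eqP Eh|/existsP [s /and3P [ts sX ch]]].
    rewrite Eh eqxx /= in c2; rewrite Eh in hb.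
    by apply/orP; right; apply/existsP; exists b; rewrite hb c2 connect0.
  have h0 := del_ne ch (nbr_ne tp ts).
  case: (eqVneq b t0) => [//|b0] /=.
  apply/existsP; exists s; rewrite ts sX /=.
  exact: connect_trans ch (connect1 (del_edge hb h0 b0)).
- rewrite /tE_minus_edge /= => /andP [/orP [/eqP ->|hX]]; first by rewrite eqxx.
  move=> _ /orP [/eqP Eh|/existsP [s /and3P [ts sX ch]]].
    by rewrite Eh (negbTE t0XT) in hX.
  have sh : s != h by apply/eqP => Es; rewrite Es hX in sX.
  by rewrite (negbTE (tree_nbr_disc (tp_tree tp) ts (XT_nbr hX) sh)) in ch.
Qed.

Definition Aset := [set v | [exists x, [&& torso_vert tE B t0 x, x \in X & v \in cls tE B t0 x]]].
Definition Cset := [set v | [exists x, [&& torso_vert tE B t0 x, x \notin X & v \in cls tE B t0 x]]].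

Lemma sideN v : v \in side tE' B' None (Some t0) None -> v \in Aset.
Proof.
rewrite !inE => /existsP [h' /andP [vh ch]].
have := connect_inv PN_inv ch isT.
case: h' vh {ch} => [h|] /=.
  move=> vh /existsP [s /andP [sX cs]].
  have h0 := del_ne cs (XT_ne sX); rewrite (negbTE h0) in vh.
  apply/existsP; exists (inr s); rewrite /= (XT_nbr sX).
  have sXX : inr s \in X by move: sX; rewrite inE => /andP []. 
  rewrite sXX /= inE; apply/existsP; exists h.
  by rewrite vh cs.
rewrite inE => /andP [vB vX] _; apply/existsP; exists (inl v); rewrite /= vB vX /=.
by rewrite inE.
Qed.

Lemma sideC v : v \in side tE' B' None (Some t0) (Some t0) -> v \in Cset.
Proof.
rewrite !inE => /existsP [h' /andP [vh ch]].
have := connect_inv PC_inv ch; rewrite /= eqxx => /(_ isT).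
case: h' vh {ch} => [h|] //= vh /orP [/eqP Eh|/existsP [s /and3P [ts sX cs]]].
  move: vh; rewrite Eh eqxx !inE => /andP [vX vB].
  apply/existsP; exists (inl v); rewrite /=; apply/and3P; split => //.
    by apply/negP => H; apply: (negP vX); apply/andP; split.
  by case: ifP => [_|/negP []//]; rewrite inE.
have h0 := del_ne cs (nbr_ne tp ts); rewrite (negbTE h0) in vh.
apply/existsP; exists (inr s); rewrite /= ts /=.
have sXX : inr s \notin X by apply/negP => H; apply: (negP sX); rewrite inE ts H.
rewrite sXX /= inE; apply/existsP; exists h.
by rewrite vh cs.
Qed.

Lemma cut_bound :
  (\sum_(u in Aset) \sum_(v in Cset) m u v <=
   \sum_(x | torso_vert tE B t0 x && (x \in X))
     \sum_(y | torso_vert tE B t0 y && (y \notin X)) tmult m tE B t0 x y)%N.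
Proof.
refine (leq_trans (sum_cover (P := fun x => torso_vert tE B t0 x && (x \in X))
   (C := cls tE B t0) (U := Aset) (fun u => \sum_(v in Cset) m u v) _) _).
  by move=> v; rewrite inE => /existsP [x /and3P [tx xX vx]]; exists x; rewrite ?tx.
apply: leq_sum => x /andP [tx xX].
rewrite (eq_bigr (fun y => \sum_(u in cls tE B t0 x) \sum_(v in cls tE B t0 y) m u v)); last first.
  move=> y /andP [_ yX]; rewrite /tmult; case: eqP => // Exy.
  by rewrite Exy (negbTE yX) in xX.
rewrite [X in (_ <= X)%N]exchange_big /=; apply: leq_sum => u _.
apply: sum_cover => v; rewrite inE => /existsP [y /and3P [ty yX vy]]; exists y; by rewrite ?ty ?yX.
Qed.

Hypothesis Xcut : (\sum_(x | torso_vert tE B t0 x && (x \in X))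
          \sum_(y | torso_vert tE B t0 y && (y \notin X)) tmult m tE B t0 x y <= k)%N.

Lemma crossc : (cross m tE' B' None (Some t0) <= k)%N.
Proof.
refine (leq_trans (cross_bound m sideN sideC) _).
exact: leq_trans cut_bound Xcut.
Qed.

Lemma adh' : (adhesion m tE' B' <= k)%N.
Proof.
have msym : forall u v, m u v = m v u by case: mg.
apply/bigmax_leqP => -[x y] /= exy.
case: (eqVneq (f x) (f y)) => [fe|fn].
  move: exy fe; case: x => [a|]; case: y => [b|] //=.
  - by move=> /and3P [ab _ _] Ee; rewrite Ee (tp_irr tp) in ab.
  - by move=> _ ->; rewrite cross_swap //; exact: crossc.
  - by move=> _ <-; exact: crossc.
have fxy : tE (f x) (f y) by case/orP: (f_edge exy) => // fe; rewrite fe in fn.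
refine (leq_trans (cross_bound m (@side_map x y (nonc_cond exy fn) x) (@side_map x y (nonc_cond exy fn) y)) _).
apply: leq_trans (cross_adh m B fxy) _.
by case: tight.
Qed.

Lemma torso_high t x : torso_vert tE B t x -> (k < tdeg m tE B t x)%N ->
  exists w, [/\ x = inl w, w \in B t & (k < degG m w)%N].
Proof.
case: x => [w|s] /= tx hx.
  by exists w; split => //; exact: leq_trans hx (tdeg_inl m tp tx).
case: tight => adh _.
have := leq_trans (leq_trans (tdeg_inr mg tp tx) (cross_adh m B tx)) adh.
by rewrite leqNgt hx.
Qed.

Hypothesis hx : exists x, [/\ torso_vert tE B t0 x, x \in X & (k < tdeg m tE B t0 x)%N].
Hypothesis hy : exists y, [/\ torso_vert tE B t0 y, y \notin X & (k < tdeg m tE B t0 y)%N].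

Lemma high' t' : exists2 w, w \in B' t' & (k < degG m w)%N.
Proof.
case: t' => [h|] /=.
  case: (eqVneq h t0) => [Eh|ne].
    case: hy => y [ty yX hy']; case: (torso_high ty hy') => w [Ey wB hw].
    exists w => //; rewrite !inE wB andbT; apply/negP => /andP [_ H].
    by rewrite Ey H in yX.
  exact: high_in_bag mg tp h tight.
case: hx => x [tx xX hx']; case: (torso_high tx hx') => w [Ex wB hw].
by exists w => //; rewrite inE wB -Ex xX.
Qed.

Lemma tight' : k_tight m k tE' B'.
Proof.
split; first exact: adh'.
move=> t'; case: (high' t') => w wB hw.
exact: leq_trans hw (tDelta_lower mg part' wB).
Qed.

Lemma sum_opt (F : option T -> int) :
  (\sum_(x : option T) F x = F None + \sum_(t : T) F (Some t))%R.
Proof.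
rewrite (bigD1 None) //=; congr (_ + _)%R.
rewrite (reindex_onto (fun t => Some t) (fun x => odflt t0 x)); last by case.
by apply: eq_bigl => t; rewrite eqxx.
Qed.

Lemma w_lt : (wD m k B' < wD m k B)%R.
Proof.
rewrite /wD sum_opt (bigD1 t0) //= [X in (_ < X)%R](bigD1 t0) //=.
rewrite (eq_bigr (fun t => ((sD m k B t)%:Z - 1)%R)); last first.
  by move=> t ne; rewrite /sD /= (negbTE ne).
have Hs : (sD m k B' None + sD m k B' (Some t0) = sD m k B t0)%N.
  rewrite /sD /= eqxx -(cardsID XV [set v in B t0 | (k < degG m v)%N]).
  congr (_ + _); apply: eq_card => v; rewrite !inE;
    by case: (v \in B t0); case: (inl v \in X); case: (k < degG m v).
move: Hs; set a := sD m k B' None; set b := sD m k B' (Some t0); set c := sD m k B t0.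
set S := (\sum_(i | i != t0) _)%R => Hs.
rewrite -Hs.
lia.
Qed.

End New.

Theorem mainTheorem7 (V : finType) (m : V -> V -> nat) (k : nat)
    (T : finType) (tE : rel T) (B : T -> {set V}) :
  multigraph m ->
  tree_partition tE B ->
  k_tight m k tE B ->
  (exists t : T, k_splittable m k tE B t) ->
  exists (T' : finType) (tE' : rel T') (B' : T' -> {set V}),
    [/\ tree_partition tE' B', k_tight m k tE' B' &
        (wD m k B' < wD m k B)%R].
Proof.
move=> mg tp tight [t0 [X [Xcut hx hy]]].
exists (option T), (tE' tE t0 X), (B' B t0 X); split.
- exact: part'.
- have := tight' mg tp tight Xcut hx hy. by [].
- exact: w_lt Xcut.
Qed.
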